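(* Suppose assumptions (i), (ii), (iv) hold. There is a number $\lambda^*$ such that, if $\lambda \geq \lambda^*$, all trajectories of the system $$\begin{aligned} \dot\varrho &= 0,\qquad \dot w = s(\varrho,w),\qquad \dot z = f_0(\varrho,w,z),\\ \dot\chi &= (A-KC)\chi + b\,\beta^T(X,\chi_1+\tau_1)\tilde\theta + \Delta(\chi_1,\tau_1,\theta) + \varphi(\varrho,w,z),\\ \dot{\tilde\theta} &= -\beta(X,\chi_1+\tau_1)\chi_1 - \mathrm{dzv}_\ell(\tilde\theta+\theta(\varrho)),\\ \dot X &= FX + G\,\Omega(\chi_1+\tau_1), \end{aligned}$$ with initial conditions $(\varrho,w,z)\in \mathbf{Z}=P\times W\times Z$, are bounded.
   Context: Plant: $\dot z = f_0(\varrho,w,z)+f_1(\varrho,w,z,e)e$, $\dot e = q(\varrho,w,z,e)+u$, with $z\in\mathbb{R}^n$, $e,u\in\mathbb{R}$, driven by the exosystem $\dot\varrho=0$, $\dot w = s(\varrho,w)$; all functions $C^1$; $P\subset\mathbb{R}^p$, $W\subset\mathbb{R}^s$, $Z\subset\mathbb{R}^n$ compact. Set $\mathbf{z}=\mathrm{col}(\varrho,w,z)$, $\mathbf{f}_0(\mathbf{z})=\mathrm{col}(0,s(\varrho,w),f_0(\varrho,w,z))$, $c(\mathbf{z}) = -q(\varrho,w,z,0)$, $\mathbf{Z}=P\times W\times Z$. Assumption (i): $P\times W$ is a differential submanifold with boundary of $\mathbb{R}^p\times\mathbb{R}^s$, invariant for the exosystem. Assumption (ii): there is a compact $\mathcal{Z}\subset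 P\times W\times\mathbb{R}^n$ containing the positive orbit of $\mathbf{Z}$ under $\dot{\mathbf{z}}=\mathbf{f}_0(\mathbf{z})$; the $\omega$-limit set $\mathcal{A}_0=\omega(\mathbf{Z})$ is a differential submanifold with boundary; and there is $d_1>0$ such that $\mathbf{z}\in P\times W\times\mathbb{R}^n$, $\mathrm{dist}(\mathbf{z},\mathcal{A}_0)\le d_1$ imply $\mathbf{z}\in\mathbf{Z}$. Assumption (iv): there exist an integer $d$, a $C^1$ map $\tau:\mathcal{Z}\to\mathbb{R}^d$, a $C^0$ map $\theta:P\to\mathbb{R}^q$, the observable pair $(A,C)$ with $A$ the $d\times d$ upper shift matrix (ones on the superdiagonal, zeros elsewhere) and $C=(1\ 0\ \cdots\ 0)$, and $C^1$ maps $\phi:\mathbb{R}\to\mathbb{R}^d$, $\Omega:\mathbb{R}\to\mathbb{R}^{d\times q}$ (which may be taken with compact support, hence globally Lipschitz) such that $\frac{\partial\tau}{\partial\mathbf{z}}\mathbf{f}_0(\mathbf{z}) = A\tau(\mathbf{z})+\phi(C\tau(\mathbf{z}))+\Omega(C\tau(\mathbf{z}))\theta(\varrho)$ and $c(\mathbf{z})=C\tau(\mathbf{z})$ for all $\mathbf{z}\in\mathcal{A}_0$. Design quantities: $b=\mathrm{col}(1,b_2,\dots,b_d)$ where $\lambda^{d-1}+b_2\lambda^{d-2}+\dots+b_d$ has $d-1$ distinct roots with negative real part; $F$ is the $(d-1)\times(d-1)$ matrix with first column $-\mathrm{col}(b_2,\dots,b_d)$ plus ones on the superdiagonal (Hurwitz);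 $G=(-\mathrm{col}(b_2,\dots,b_d)\ \ I_{d-1})$ is $(d-1)\times d$; $X$ is $(d-1)\times q$, $M(X)=\mathrm{col}(0,X)$; $\beta(X,\xi_1)=[CAM(X)+C\Omega(\xi_1)]^T$; $K=Ab+\lambda b$ with $\lambda>0$; $\mathrm{dzv}_\ell$ applies componentwise a $C^1$ dead zone $\mathrm{dz}_\ell(x)$ equal to $0$ for $|x|\le\ell$ and to $x$ for $|x|\ge\ell+1$, with $\ell>\max_{\varrho\in P}|\theta(\varrho)|$. The system above is the zero dynamics (for output $e$) of the plant in closed loop with the controller $u=\xi_1+v$, $\dot\xi = A\xi+\phi(\xi_1)+\Omega(\xi_1)\hat\theta+H(X,\xi_1)v-M(X)\mathrm{dzv}_\ell(\hat\theta)$, $\dot{\hat\theta}=\beta(X,\xi_1)v-\mathrm{dzv}_\ell(\hat\theta)$, $\dot X=FX+G\Omega(\xi_1)$, $H=M(X)\beta+K$, written in coordinates $\tilde\theta=\hat\theta-\theta(\varrho)$, $\eta=\xi-M(X)\tilde\theta$, $\chi=\eta-\tau(\varrho,w,z)$; here $\tau_1$ is the first component of $\tau(\varrho,w,z)$, $\Delta(\chi_1,\tau_1,\theta)=\phi(\chi_1+\tau_1)-\phi(\chi_1)+[\Omega(\chi_1+\tau_1)-\Omega(\chi_1)]\theta(\varrho)$, and $\varphi(\varrho,w,z)=K(c-\tau_1)+A\tau+\phi(\tau_1)+\Omega(\tau_1)\theta(\varrho)-\frac{\partial\tau}{\partial z}f_0-\frac{\partial\tau}{\partial w}s$, which vanishes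 on $\mathcal{A}_0$. *)

(* Defs.v *)
From HB Require Import structures.
From mathcomp Require Import all_boot all_order all_algebra.
From mathcomp Require Import all_classical all_reals all_analysis.
From mathcomp Require Import complex.
Set Implicit Arguments. Unset Strict Implicit. Unset Printing Implicit Defensive.
Import Order.TTheory GRing.Theory Num.Theory.
Import numFieldNormedType.Exports.
Local Open Scope classical_set_scope.
Local Open Scope ring_scope.

Section Defs.
Variable R : realType.

(* C^1 on an open set U: differentiable at every point of U, and the
   derivative x |-> 'd f x is continuous on U (tested on every direction v,
   which in finite dimension is continuity of the derivative). *)
Definition C1_on {V W : normedModType R} (U : set V) (f : V -> W) : Prop :=
  (forall x, U x -> differentiable f x) /\
  (forall v x, U x -> {for x, continuous (fun y => 'd f y v)}).

Definition C1 {V W : normedModType R} (f : V -> W) : Prop := C1_on setT f.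

Definition open_itv (a b : \bar R) : set R := [set t | (a < t%:E < b)%E].

Definition is_solution {V : normedModType R} (F : V -> V) (I : set R)
  (x : R -> V) : Prop :=
  forall t, I t -> derivable x t 1 /\ 'D_1 x t = F (x t).

Definition invariant_set {V : normedModType R} (F : V -> V) (S : set V) : Prop :=
  forall (a b : \bar R) (x : R -> V), (a < 0 < b)%E ->
    is_solution F (open_itv a b) x -> S (x 0) ->
    forall t, open_itv a b t -> S (x t).

Definition pos_orbit_in {V : normedModType R} (F : V -> V) (S K : set V) :
  Prop :=
  forall (a b : \bar R) (x : R -> V), (a < 0 < b)%E ->
    is_solution F (open_itv a b) x -> S (x 0) ->
    forall t, 0 <= t -> (t%:E < b)%E -> K (x t).

Definition omega_limit {V : normedModType R} (F : V -> V) (S : set V) :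
  set V :=
  [set y | exists (x : nat -> R -> V) (t : nat -> R),
     (forall k, S (x k 0) /\
        exists a : R, a < 0 /\ is_solution F [set u | a < u] (x k)) /\
     (t @ \oo --> +oo) /\
     ((fun k => x k (t k)) @ \oo --> y)].

Definition half_space (N k : nat) : set 'cV[R]_N :=
  [set y | (forall i : 'I_N, (k <= i)%N -> y i 0 = 0) /\
           (forall i : 'I_N, (i.+1 = k)%N -> 0 <= y i 0)].

Definition submanifold_wb (N : nat) (M : set 'cV[R]_N) : Prop :=
  forall x, M x -> exists (k : nat) (U V : set 'cV[R]_N)
    (psi psiinv : 'cV[R]_N -> 'cV[R]_N),
    [/\ (k <= N)%N, open U, open V, U x &
    [/\ forall u, U u -> V (psi u) /\ psiinv (psi u) = u,
        forall v, V v -> U (psiinv v) /\ psi (psiinv v) = v,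
        C1_on U psi, C1_on V psiinv &
        forall u, U u -> (M u <-> @half_space N k (psi u))]].

Definition dist_le {V : normedModType R} (x : V) (A : set V) (d : R) : Prop :=
  forall e, 0 < e -> exists2 a, A a & `|x - a| < d + e.

Definition rho_of {p sw n : nat} (x : 'cV[R]_(p + sw + n)) : 'cV[R]_p :=
  usubmx (usubmx x).
Definition w_of {p sw n : nat} (x : 'cV[R]_(p + sw + n)) : 'cV[R]_sw :=
  dsubmx (usubmx x).
Definition z_of {p sw n : nat} (x : 'cV[R]_(p + sw + n)) : 'cV[R]_n :=
  dsubmx x.

Definition f0bold {p sw n : nat} (s : 'cV[R]_p -> 'cV[R]_sw -> 'cV[R]_sw)
  (f0 : 'cV[R]_p -> 'cV[R]_sw -> 'cV[R]_n -> 'cV[R]_n)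
  (x : 'cV[R]_(p + sw + n)) : 'cV[R]_(p + sw + n) :=
  col_mx (col_mx 0 (s (rho_of x) (w_of x))) (f0 (rho_of x) (w_of x) (z_of x)).

(* ---------- design matrices (d = m.+1) ---------- *)
Definition Ash (m : nat) : 'M[R]_m.+1 := \matrix_(i, j) ((j : nat) == i.+1)%:R.
Definition Crow (m : nat) : 'rV[R]_m.+1 := \row_j ((j : nat) == 0%N)%:R.
Definition first (m : nat) (v : 'cV[R]_m.+1) : R := (Crow m *m v) 0 0.
(* b = col(1, b_2, ..., b_d), with bt = col(b_2, ..., b_d) *)
Definition bvec (m : nat) (bt : 'cV[R]_m) : 'cV[R]_m.+1 := col_mx (1 : 'M[R]_1) bt.
Definition bpoly (m : nat) (bt : 'cV[R]_m) : {poly R} :=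
  'X^m + \sum_(i < m) (bt i 0)%:P * 'X^(m - i.+1).
Definition Fmat (m : nat) (bt : 'cV[R]_m) : 'M[R]_m :=
  \matrix_(i, j) (if (j : nat) == 0%N then - bt i 0 else ((j : nat) == i.+1)%:R).
Definition Gmat (m : nat) (bt : 'cV[R]_m) : 'M[R]_(m, m.+1) := row_mx (- bt) (1%:M : 'M[R]_m).
Definition Mmat (m q : nat) (X : 'M[R]_(m, q)) : 'M[R]_(m.+1, q) := col_mx (0 : 'M[R]_(1, q)) X.
Definition beta (m q : nat) (Om : R -> 'M[R]_(m.+1, q)) (X : 'M[R]_(m, q))
  (xi1 : R) : 'cV[R]_q :=
  (Crow m *m Ash m *m Mmat X + Crow m *m Om xi1)^T.
Definition Kvec (m : nat) (bt : 'cV[R]_m) (lam : R) : 'cV[R]_m.+1 :=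
  Ash m *m bvec bt + lam *: bvec bt.
Definition dzv (q : nat) (dz : R -> R) (v : 'cV[R]_q) : 'cV[R]_q := map_mx dz v.

Definition eucl (q : nat) (v : 'cV[R]_q) : R := Num.sqrt (\sum_i v i 0 ^+ 2).

(* state of the closed loop: ((bold z, chi), (theta~, X)) *)
Definition cl_state (p sw n m q : nat) : Type :=
  ('cV[R]_(p + sw + n) * 'cV[R]_m.+1) * ('cV[R]_q * 'M[R]_(m, q)).

Definition cl_field (p sw n m q : nat)
  (s : 'cV[R]_p -> 'cV[R]_sw -> 'cV[R]_sw)
  (f0 : 'cV[R]_p -> 'cV[R]_sw -> 'cV[R]_n -> 'cV[R]_n)
  (c : 'cV[R]_(p + sw + n) -> R)
  (tau : 'cV[R]_(p + sw + n) -> 'cV[R]_m.+1)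
  (theta : 'cV[R]_p -> 'cV[R]_q)
  (phi : R -> 'cV[R]_m.+1) (Om : R -> 'M[R]_(m.+1, q))
  (bt : 'cV[R]_m) (lam : R) (dz : R -> R)
  (st : cl_state p sw n m q) : cl_state p sw n m q :=
  let: ((x, chi), (tht, X)) := st in
  let A := Ash m in let C := Crow m in
  let b := bvec bt in let K := Kvec bt lam in
  let tau1 := first (tau x) in
  let chi1 := first chi in
  let th := theta (rho_of x) in
  let bet := beta Om X (chi1 + tau1) in
  let Delta := phi (chi1 + tau1) - phi chi1 + (Om (chi1 + tau1) - Om chi1) *m th in
  let varphi := (c x - tau1) *: K + A *m tau x + phi tau1 + Om tau1 *m th
                - 'd tau x (f0bold s f0 x) in
  ((f0bold s f0 x,
    (A - K *m C) *m chi + b *m (bet^T *m tht) + Delta + varphi),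
   (- (chi1 *: bet) - dzv dz (tht + th),
    Fmat bt *m X + Gmat bt *m Om (chi1 + tau1))).

End Defs.

(* Main.v *)
Require Import Defs.
From HB Require Import structures.
From mathcomp Require Import all_boot all_order all_algebra.
From mathcomp Require Import all_classical all_reals all_analysis.
From mathcomp Require Import complex.
From mathcomp Require Import ring lra.
Import Order.TTheory GRing.Theory Num.Theory.
Import numFieldNormedType.Exports.
Local Open Scope classical_set_scope.
Local Open Scope ring_scope.

Module Helpers.
Set Implicit Arguments. Unset Strict Implicit. Unset Printing Implicit Defensive.
Import Num.Def.

Section S.
Variable R : realType.

Lemma derive_lin (V W : normedModType R) (L : V -> W) (f : R -> V) (t : R) :
  (forall (a : R) u v, L (a *: (u - v)) = a *: (L u - L v)) -> continuous L ->
  derivable f t 1 -> derivable (L \o f) t 1 /\ 'D_1 (L \o f) t = L ('D_1 f t).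
Proof.
move=> Ll Lc df.
have E : (fun h : R => h^-1 *: ((L \o f \o shift t) (h *: 1) - (L \o f) t)) =
   L \o (fun h : R => h^-1 *: ((f \o shift t) (h *: 1) - f t)).
  by apply: funext => h /=; rewrite Ll.
have cv : (L \o (fun h : R => h^-1 *: ((f \o shift t) (h *: 1) - f t))) @ 0^' --> L ('D_1 f t).
  apply: cvg_comp; last exact: Lc.
  exact: df.
split.
  by rewrite /derivable E; apply/cvg_ex; eexists; exact: cv.
by rewrite /derive E; apply/cvg_lim.
Qed.

Lemma derive_fst (U V : normedModType R) (f : R -> U * V) t :
  derivable f t 1 -> derivable (fun s => (f s).1) t 1 /\ 'D_1 (fun s => (f s).1) t = ('D_1 f t).1.
Proof.
move=> df; apply: (@derive_lin _ _ fst) => //.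
move=> x; apply: cvg_fst; exact: cvg_id.
Qed.

Lemma derive_snd (U V : normedModType R) (f : R -> U * V) t :
  derivable f t 1 -> derivable (fun s => (f s).2) t 1 /\ 'D_1 (fun s => (f s).2) t = ('D_1 f t).2.
Proof.
move=> df; apply: (@derive_lin _ _ snd) => //.
move=> x; apply: cvg_snd; exact: cvg_id.
Qed.

Lemma derive_entry m n (Y : R -> 'M[R]_(m, n)) t i j :
  derivable Y t 1 -> derivable (fun s => Y s i j) t 1 /\ 'D_1 (fun s => Y s i j) t = 'D_1 Y t i j.
Proof.
move=> dY; split; first by move/derivable_mxP: dY; apply.
by rewrite (derive_mx dY) mxE.
Qed.

Lemma derive_entries m n (Y : R -> 'M[R]_(m, n)) t :
  (forall i j, derivable (fun s => Y s i j) t 1) ->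
  derivable Y t 1 /\ 'D_1 Y t = \matrix_(i, j) 'D_1 (fun s => Y s i j) t.
Proof.
move=> H; have dY : derivable Y t 1 by apply/derivable_mxP.
by split => //; rewrite (derive_mx dY).
Qed.

Lemma mx_entry_le m n (A : 'M[R]_(m, n)) i j : `|A i j| <= `|A|.
Proof.
rewrite [leRHS]/Num.Def.normr /= mx_normrE.
by apply/bigmax_geP; right => /=; exists (i, j).
Qed.

Lemma mx_norm_le m n (A : 'M[R]_(m, n)) M : 0 <= M ->
  (forall i j, `|A i j| <= M) -> `|A| <= M.
Proof.
move=> M0 H; rewrite [leLHS]/Num.Def.normr /= mx_normrE.
by apply: bigmax_le => // -[i j] _; apply: H.
Qed.

Lemma bounded_on_compact (V W : normedModType R) (A : set V) (f : V -> W) :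
  compact A -> {within A, continuous f} ->
  exists M, 0 <= M /\ forall v, A v -> `|f v| <= M.
Proof.
move=> cA cf.
have /compact_bounded [M [Mr HM]] := continuous_compact cf cA.
exists (maxr 0 (M + 1)); split; first by rewrite le_max lexx.
move=> v Av; rewrite le_max; apply/orP; right.
have := HM (M + 1); rewrite ltrDl ltr01 => /(_ isT (f v)).
by apply; exists v.
Qed.

Lemma prod_norm_le (U V : normedModType R) (x : U * V) M :
  `|x.1| <= M -> `|x.2| <= M -> `|x| <= M.
Proof. by move=> h1 h2; rewrite prod_normE /= ge_max h1 h2. Qed.

Definition DV (f : R -> R) (s d : R) := derivable f s 1 /\ 'D_1 f s = d.

Lemma DV_cst c s : DV (fun _ => c) s 0.
Proof. split; [exact: derivable_cst | exact: derive_cst]. Qed.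

Lemma DV_id s : DV id s 1.
Proof. split; [exact: derivable_id | exact: derive_id]. Qed.

Lemma DV_add f g s df dg : DV f s df -> DV g s dg -> DV (fun u => f u + g u) s (df + dg).
Proof.
move=> [f1 f2] [g1 g2]; split; first exact: (derivableD f1 g1).
by rewrite (deriveD f1 g1) f2 g2.
Qed.

Lemma DV_opp f s df : DV f s df -> DV (fun u => - f u) s (- df).
Proof.
move=> [f1 f2]; split; first exact: (derivableN f1).
by rewrite (deriveN f1) f2.
Qed.

Lemma DV_sub f g s df dg : DV f s df -> DV g s dg -> DV (fun u => f u - g u) s (df - dg).
Proof. by move=> hf hg; apply: DV_add => //; apply: DV_opp. Qed.

Lemma DV_mul f g s df dg : DV f s df -> DV g s dg -> DV (fun u => f u * g u) s (df * g s + f s * dg).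
Proof.
move=> [f1 f2] [g1 g2]; split; first exact: (derivableM f1 g1).
rewrite (deriveM f1 g1) f2 g2 /GRing.scale /=; lra.
Qed.

Lemma DV_scal (c : R) f s df : DV f s df -> DV (fun u => c * f u) s (c * df).
Proof.
move=> h; have := DV_mul (DV_cst c s) h; rewrite mul0r add0r.
by [].
Qed.

Lemma DV_sum n (F : 'I_n -> R -> R) s (dF : 'I_n -> R) :
  (forall i, DV (F i) s (dF i)) -> DV (fun u => \sum_i F i u) s (\sum_i dF i).
Proof.
elim: n F dF => [|n IH] F dF H.
  under eq_fun do rewrite big_ord0; rewrite big_ord0; exact: DV_cst.
under eq_fun do rewrite big_ord_recl; rewrite big_ord_recl.
apply: DV_add; first exact: H.
exact: (IH (fun i => F (lift ord0 i)) (fun i => dF (lift ord0 i))).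
Qed.

Lemma DV_ext f g s d : (forall u, f u = g u) -> DV f s d -> DV g s d.
Proof. by move=> e; have -> : f = g by apply: funext. Qed.

Lemma DV_expk (k : R) s : DV (fun u => expR (k * u)) s (k * expR (k * s)).
Proof.
have dl : DV (fun u => k * u) s k by have := DV_scal k (DV_id s); rewrite mulr1.
have dc : derivable (expR \o (fun u => k * u)) s 1.
  apply/derivable1_diffP; apply: differentiable_comp.
    by apply/derivable1_diffP; case: dl.
  by apply/derivable1_diffP; exact: derivable_expR.
split; first exact: dc.
rewrite -derive1E derive1_comp; first last.
- exact: derivable_expR.
- by case: dl.
have E := congr1 (fun f => f (k * s)) (@derive_expR R).
by rewrite !derive1E /= in E *; rewrite E (proj2 dl) mulrC.
Qed.

Lemma comparison (f : R -> R) (b : \bar R) (k C : R) : 0 < k ->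
  (forall t, 0 <= t -> (t%:E < b)%E -> derivable f t 1 /\ 'D_1 f t <= - k * f t + C) ->
  forall t, 0 <= t -> (t%:E < b)%E -> f t <= maxr (f 0) (C / k).
Proof.
move=> k0 H t t0 tb.
pose g := fun s => expR (k * s) * (f s - C / k).
have dH s : 0 <= s -> s <= t -> derivable f s 1.
  move=> s0 st; have hs : (s%:E < b)%E by apply: le_lt_trans tb; rewrite lee_fin.
  exact: (H s s0 hs).1.
have dg s : 0 <= s -> s <= t -> derivable g s 1 /\ 'D_1 g s = expR (k * s) * ('D_1 f s + k * f s - C).
  move=> s0 st.
  have := DV_mul (DV_expk k s) (DV_sub (conj (dH s s0 st) erefl) (DV_cst (C / k) s)).
  move=> [h1 h2]; split => //; rewrite h2.
  have kn : k != 0 by rewrite gt_eqF.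
  by field.
have gle : g t <= g 0.
  apply: (@ler0_derive1_nincr _ g 0 t).
  - move=> u; rewrite in_itv /= => /andP[s0 st]; exact: (dg u (ltW s0) (ltW st)).1.
  - move=> u; rewrite in_itv /= => /andP[s0 st]; rewrite derive1E (dg u (ltW s0) (ltW st)).2.
    rewrite pmulr_rle0 ?expR_gt0 //.
    have hs : (u%:E < b)%E by apply: lt_trans tb; rewrite lte_fin.
    have [_ h] := H u (ltW s0) hs; lra.
  - apply: derivable_within_continuous => u; rewrite in_itv /= => /andP[s0 st].
    exact: (dg u s0 st).1.
  - by [].
  - by [].
  - by [].
move: gle; rewrite /g mulr0 expR0 mul1r => gle.
rewrite le_max; case: (lerP (f t) (C / k)) => [h0|ht]; first by apply/orP; right.
apply/orP; left.
have e1 : 1 <= expR (k * t) by rewrite -expR0 ler_expR mulr_ge0 // ltW.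
have : f t - C / k <= expR (k * t) * (f t - C / k).
  by rewrite ler_peMl // subr_ge0 ltW.
move=> h; have := le_trans h gle; lra.
Qed.

End S.


Notation cRe := (@complex.Re _).
Notation cIm := (@complex.Im _).

Section B.
Variable R : realType.

Lemma bpoly_root m (bt : 'cV[R]_m) (r : R[i]) :
  root (map_poly (real_complex R) (bpoly bt)) r ->
  r ^+ m + \sum_(i < m) (bt i 0)%:C%C * r ^+ (m - i.+1) = 0.
Proof.
move/rootP; rewrite /bpoly rmorphD /= rmorph_sum /= hornerD horner_sum.
rewrite map_polyXn hornerXn => h; rewrite -[RHS]h; congr (_ + _); apply: eq_bigr => i _.
by rewrite rmorphM /= map_polyC map_polyXn hornerM hornerC hornerXn.
Qed.

Lemma KA m (bt : 'cV[R]_m) (r : R[i]) :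
  root (map_poly (real_complex R) (bpoly bt)) r ->
  forall j : 'I_m, \sum_(i < m) r ^+ (m - i.+1) * (Fmat bt i j)%:C%C = r * r ^+ (m - j.+1).
Proof.
move=> /bpoly_root hr j.
have jm := ltn_ord j.
case: (eqVneq (j : nat) 0%N) => j0.
  under eq_bigr do rewrite mxE j0 eqxx.
  have -> : r * r ^+ (m - j.+1) = r ^+ m.
    by rewrite j0 -exprS subn1 prednK // (leq_ltn_trans _ jm).
  have -> : r ^+ m = - \sum_(i < m) (bt i 0)%:C%C * r ^+ (m - i.+1).
    by apply/eqP; rewrite -addr_eq0 hr.
  rewrite -sumrN; apply: eq_bigr => i _.
  by rewrite rmorphN /= mulrN mulrC.
under eq_bigr do rewrite mxE (negbTE j0).
have jp : (j.-1 < m)%N by rewrite (leq_ltn_trans _ jm) // leq_pred.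
rewrite (bigD1 (Ordinal jp)) //= big1 ?addr0; last first.
  move=> i /eqP ne; case: (eqVneq (j : nat) i.+1) => e; last by rewrite (_ : (false%:R)%:C%C = 0 :> R[i]) ?mulr0.
  by exfalso; apply: ne; apply: val_inj => /=; rewrite e.
rewrite prednK ?lt0n // eqxx mulr1.
by rewrite -exprS; congr (_ ^+ _); rewrite -subSn // prednK ?lt0n // subSS.
Qed.


Lemma ReD (x y : R[i]) : cRe (x + y) = cRe x + cRe y.
Proof. by move: x y => [a b] [c d]. Qed.
Lemma ImD (x y : R[i]) : cIm (x + y) = cIm x + cIm y.
Proof. by move: x y => [a b] [c d]. Qed.

Lemma Re_sum n (F : 'I_n -> R[i]) : cRe (\sum_i F i) = \sum_i cRe (F i).
Proof.
elim: n F => [|n IH] F; first by rewrite !big_ord0.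
by rewrite !big_ord_recr ReD IH.
Qed.

Lemma Im_sum n (F : 'I_n -> R[i]) : cIm (\sum_i F i) = \sum_i cIm (F i).
Proof.
elim: n F => [|n IH] F; first by rewrite !big_ord0.
by rewrite !big_ord_recr ImD IH.
Qed.

Lemma Re_mulC (z : R[i]) (w : R) : cRe (z * w%:C%C) = cRe z * w.
Proof. move: z => [a b] /=; ring. Qed.

Lemma Im_mulC (z : R[i]) (w : R) : cIm (z * w%:C%C) = cIm z * w.
Proof. move: z => [a b] /=; ring. Qed.

Lemma Re_mul (z w : R[i]) : cRe (z * w) = cRe z * cRe w - cIm z * cIm w.
Proof. by move: z w => [a b] [c d]. Qed.

Lemma Im_mul (z w : R[i]) : cIm (z * w) = cRe z * cIm w + cIm z * cRe w.
Proof. by move: z w => [a b] [c d]. Qed.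

Lemma young (k x y : R) : 0 < k -> 2 * x * y <= k * x ^+ 2 + y ^+ 2 / k.
Proof.
move=> k0; rewrite -subr_ge0.
have -> : k * x ^+ 2 + y ^+ 2 / k - 2 * x * y = (k * x - y) ^+ 2 / k.
  by field; rewrite gt_eqF.
by rewrite divr_ge0 ?sqr_ge0 // ltW.
Qed.


Lemma abs_le_sq (x : R) : `|x| <= 1 + x ^+ 2.
Proof. have [x0|x0] := lerP 0 x; [rewrite ger0_norm|rewrite ltr0_norm]; nra. Qed.

Lemma modal_one m k (bt : 'cV[R]_m) (r : R[i]) :
  root (map_poly (real_complex R) (bpoly bt)) r -> cRe r < 0 ->
  forall (b : \bar R) (Y g : R -> 'M[R]_(m, k)) (Mg : R),
  (forall t, 0 <= t -> (t%:E < b)%E -> derivable Y t 1 /\ 'D_1 Y t = Fmat bt *m Y t + g t) ->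
  (forall t, 0 <= t -> (t%:E < b)%E -> `|g t| <= Mg) ->
  forall c : 'I_k, exists M, forall t, 0 <= t -> (t%:E < b)%E ->
    `|\sum_(i < m) cRe (r ^+ (m - i.+1)) * Y t i c| <= M /\ `|\sum_(i < m) cIm (r ^+ (m - i.+1)) * Y t i c| <= M.
Proof.
move=> hr hre b Y g Mg hY hg c.
pose P := fun i : 'I_m => cRe (r ^+ (m - i.+1)).
pose Q := fun i : 'I_m => cIm (r ^+ (m - i.+1)).
pose al := cRe r. pose be := cIm r.
have hP j : \sum_i P i * Fmat bt i j = al * P j - be * Q j.
  have := congr1 cRe (KA hr j); rewrite Re_sum Re_mul => <-.
  by apply: eq_bigr => i _; rewrite Re_mulC.
have hQ j : \sum_i Q i * Fmat bt i j = al * Q j + be * P j.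
  have := congr1 cIm (KA hr j); rewrite Im_sum Im_mul => <-.
  by apply: eq_bigr => i _; rewrite Im_mulC.
pose A := fun t => \sum_i P i * Y t i c.
pose B := fun t => \sum_i Q i * Y t i c.
pose G1 := fun t => \sum_i P i * g t i c.
pose G2 := fun t => \sum_i Q i * g t i c.
have dgen (S : 'I_m -> R) t : 0 <= t -> (t%:E < b)%E ->
    DV (fun t => \sum_i S i * Y t i c) t
      (\sum_j (\sum_i S i * Fmat bt i j) * Y t j c + \sum_i S i * g t i c).
  move=> t0 tb; have [dY eY] := hY t t0 tb.
  have := DV_sum (fun i => DV_scal (S i) (derive_entry i c dY)).
  move=> [h1 h2]; split => //; rewrite h2 eY.
  rewrite (eq_bigr (fun i => S i * (\sum_j Fmat bt i j * Y t j c) + S i * g t i c)); last first.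
    by move=> i _; rewrite !mxE mulrDr.
  rewrite big_split /=; congr (_ + _).
  under eq_bigr do rewrite mulr_sumr.
  rewrite exchange_big /=; apply: eq_bigr => j _.
  rewrite mulr_suml; apply: eq_bigr => i _; by rewrite mulrA.
have dA t : 0 <= t -> (t%:E < b)%E -> DV A t (al * A t - be * B t + G1 t).
  move=> t0 tb; have [h1 h2] := dgen P t t0 tb; split => //; rewrite h2; congr (_ + _).
  under eq_bigr do rewrite hP.
  rewrite /A /B !mulr_sumr -sumrB; apply: eq_bigr => j _; ring.
have dB t : 0 <= t -> (t%:E < b)%E -> DV B t (al * B t + be * A t + G2 t).
  move=> t0 tb; have [h1 h2] := dgen Q t t0 tb; split => //; rewrite h2; congr (_ + _).
  under eq_bigr do rewrite hQ.
  rewrite /A /B !mulr_sumr -big_split; apply: eq_bigr => j _ /=; ring.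
pose N := fun t => A t * A t + B t * B t.
have dN t : 0 <= t -> (t%:E < b)%E ->
    DV N t (2 * al * N t + 2 * (A t * G1 t + B t * G2 t)).
  move=> t0 tb.
  have [h1 h2] := DV_add (DV_mul (dA t t0 tb) (dA t t0 tb)) (DV_mul (dB t t0 tb) (dB t t0 tb)).
  split => //; rewrite h2 /N; ring.
pose L1 := \sum_i `|P i| * Mg.
pose L2 := \sum_i `|Q i| * Mg.
have hG (S : 'I_m -> R) t : 0 <= t -> (t%:E < b)%E ->
    `|\sum_i S i * g t i c| <= \sum_i `|S i| * Mg.
  move=> t0 tb; apply: le_trans (ler_norm_sum _ _ _) _.
  apply: ler_sum => i _; rewrite normrM ler_wpM2l //.
  exact: le_trans (mx_entry_le _ _ _) (hg t t0 tb).
have kp : 0 < - al by rewrite oppr_gt0.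
have sq (x L : R) : `|x| <= L -> x ^+ 2 <= L ^+ 2.
  move=> h; have := h; rewrite ler_norml => /andP[h1 h2].
  have : 0 <= L by apply: le_trans h.
  nra.
have main t : 0 <= t -> (t%:E < b)%E -> DV N t ('D_1 N t) /\ 'D_1 N t <= - (- al) * N t + (L1 ^+ 2 + L2 ^+ 2) / (- al).
  move=> t0 tb; have [h1 h2] := dN t t0 tb; split; first by split.
  rewrite h2.
  have y1 := young (A t) (G1 t) kp.
  have y2 := young (B t) (G2 t) kp.
  have s1 := sq _ _ (hG P t t0 tb).
  have s2 := sq _ _ (hG Q t t0 tb).
  have e1 : G1 t ^+ 2 / - al <= L1 ^+ 2 / - al by rewrite ler_pM2r // invr_gt0.
  have e2 : G2 t ^+ 2 / - al <= L2 ^+ 2 / - al by rewrite ler_pM2r // invr_gt0.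
  rewrite mulrDl.
  have -> : N t = A t ^+ 2 + B t ^+ 2 by rewrite /N !expr2.
  lra.
have cmp := comparison (f := N) (b := b) (C := (L1 ^+ 2 + L2 ^+ 2) / (- al)) kp.
have cmp' : forall t, 0 <= t -> (t%:E < b)%E -> N t <= maxr (N 0) ((L1 ^+ 2 + L2 ^+ 2) / - al / - al).
  apply: cmp => t t0 tb; have [[h1 _] h3] := main t t0 tb; by split.
exists (1 + maxr (N 0) ((L1 ^+ 2 + L2 ^+ 2) / - al / - al)) => t t0 tb.
have hN := cmp' t t0 tb.
have hA := abs_le_sq (A t). have hB := abs_le_sq (B t).
have : A t ^+ 2 + B t ^+ 2 = N t by rewrite /N !expr2.
move=> e.
suff : `|A t| <= 1 + maxr (N 0) ((L1 ^+ 2 + L2 ^+ 2) / - al / - al) /\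
       `|B t| <= 1 + maxr (N 0) ((L1 ^+ 2 + L2 ^+ 2) / - al / - al) by [].
have := sqr_ge0 (A t); have := sqr_ge0 (B t).
split; lra.
Qed.

Lemma le_sum_one (I : finType) (F : I -> R) i0 : (forall i, 0 <= F i) -> F i0 <= \sum_i F i.
Proof. by move=> h; rewrite (bigD1 i0) //= lerDl sumr_ge0. Qed.

Lemma modal m k (bt : 'cV[R]_m) (rs : seq R[i]) :
  size rs = m -> uniq rs -> all (root (map_poly (real_complex R) (bpoly bt))) rs ->
  all (fun r => Re r < 0) rs ->
  forall (b : \bar R) (Y g : R -> 'M[R]_(m, k)),
  (forall t, 0 <= t -> (t%:E < b)%E -> derivable Y t 1 /\ 'D_1 Y t = Fmat bt *m Y t + g t) ->
  (exists Mg, forall t, 0 <= t -> (t%:E < b)%E -> `|g t| <= Mg) ->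
  exists M, forall t, 0 <= t -> (t%:E < b)%E -> `|Y t| <= M.
Proof.
move=> sz un hroots hre b Y g hY [Mg hg].
pose r (j : 'I_m) := rs`_j.
have jr (j : 'I_m) : (j < size rs)%N by rewrite sz.
have hr j : root (map_poly (real_complex R) (bpoly bt)) (r j).
  by move/allP: hroots; apply; rewrite mem_nth.
have hrr j : cRe (r j) < 0.
  move/allP: hre => /(_ (r j) (mem_nth _ (jr j))).
  by rewrite -complexRe ltcR.
have H : forall jc : 'I_m * 'I_k, exists M, forall t, 0 <= t -> (t%:E < b)%E ->
    `|\sum_(i < m) cRe (r jc.1 ^+ (m - i.+1)) * Y t i jc.2| <= M /\
    `|\sum_(i < m) cIm (r jc.1 ^+ (m - i.+1)) * Y t i jc.2| <= M.
  by move=> [j c]; exact: (modal_one (hr j) (hrr j) hY hg c).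
have [Mf hMf] := choice H.
pose a : 'rV[R[i]]_m := \row_j r j.
pose V := Vandermonde m a.
have detV : \det V^T != 0.
  rewrite det_tr det_Vandermonde; apply/prodf_neq0 => i _; apply/prodf_neq0 => j ij.
  rewrite !mxE subr_eq0 /r nth_uniq // ?jr //; by rewrite neq_ltn ij orbT.
have VU : V^T \in unitmx by rewrite unitmxE unitfE.
pose W := invmx V^T.
pose Mp (jc : 'I_m * 'I_k) := maxr 0 (Mf jc).
exists (\sum_(i < m) \sum_(c < k) \sum_(j < m) (`|cRe (W i j)| + `|cIm (W i j)|) * Mp (j, c)).
move=> t t0 tb.
have Mp0 jc : 0 <= Mp jc by rewrite /Mp le_max lexx.
have T0 (i : 'I_m) c j : 0 <= (`|cRe (W i j)| + `|cIm (W i j)|) * Mp (j, c).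
  by rewrite mulr_ge0 // addr_ge0.
apply: mx_norm_le.
  by apply: sumr_ge0 => i _; apply: sumr_ge0 => c _; apply: sumr_ge0.
move=> i0 c.
pose i := rev_ord i0.
have -> : i0 = rev_ord i by rewrite /i rev_ordK.
pose u : 'cV[R[i]]_m := \col_i (Y t (rev_ord i) c)%:C%C.
have eu : u = W *m (V^T *m u) by rewrite mulmxA mulVmx // mul1mx.
have es (j : 'I_m) : (V^T *m u) j 0 = \sum_(l < m) r j ^+ (m - l.+1) * (Y t l c)%:C%C.
  rewrite mxE (reindex_inj rev_ord_inj) /=; apply: eq_bigr => l _.
  by rewrite !mxE rev_ordK /=.
have ey : Y t (rev_ord i) c = \sum_(j < m) (cRe (W i j) * (\sum_(l < m) cRe (r j ^+ (m - l.+1)) * Y t l c)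
     - cIm (W i j) * (\sum_(l < m) cIm (r j ^+ (m - l.+1)) * Y t l c)).
  transitivity (cRe (u i 0)); first by rewrite mxE.
  rewrite eu mxE Re_sum; apply: eq_bigr => j _.
  rewrite Re_mul es Re_sum Im_sum; congr (_ * _ - _ * _); apply: eq_bigr => l _.
    by rewrite Re_mulC.
  by rewrite Im_mulC.
rewrite ey.
apply: le_trans (ler_norm_sum _ _ _) _.
apply: le_trans (le_sum_one i _); last first.
  by move=> i'; apply: sumr_ge0 => c' _; apply: sumr_ge0.
apply: le_trans (le_sum_one c _); last by move=> c'; apply: sumr_ge0.
apply: ler_sum => j _.
have [h1 h2] := hMf (j, c) t t0 tb.
have h1' : `|\sum_(l < m) cRe (r j ^+ (m - l.+1)) * Y t l c| <= Mp (j, c).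
  by apply: le_trans h1 _; rewrite /Mp le_max lexx orbT.
have h2' : `|\sum_(l < m) cIm (r j ^+ (m - l.+1)) * Y t l c| <= Mp (j, c).
  by apply: le_trans h2 _; rewrite /Mp le_max lexx orbT.
apply: le_trans (ler_normB _ _) _.
rewrite !normrM mulrDl lerD // ler_wpM2l //.
Qed.

End B.


Section C.
Variable R : realType.

Definition ext n (v : 'cV[R]_n) (j : nat) : R := \sum_(i < n) ((i : nat) == j)%:R * v i 0.

Lemma ext_sum n (f : nat -> R) j :
  \sum_(i < n) ((i : nat) == j)%:R * f i = if (j < n)%N then f j else 0.
Proof.
case: ltnP => jn.
  rewrite (bigD1 (Ordinal jn)) //= eqxx mul1r big1 ?addr0 // => i ne.
  case: (eqVneq (i : nat) j) => e; last by rewrite mul0r.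
  by exfalso; move/eqP: ne; apply; apply: val_inj.
rewrite big1 // => i _; case: (eqVneq (i : nat) j) => e; last by rewrite mul0r.
by move: (ltn_ord i); rewrite e ltnNge jn.
Qed.

Lemma ext_ord n (v : 'cV[R]_n) (i : 'I_n) : ext v i = v i 0.
Proof.
rewrite /ext (bigD1 i) //= eqxx mul1r big1 ?addr0 // => j ne.
case: (eqVneq (j : nat) i) => e; last by rewrite mul0r.
by exfalso; move/eqP: ne; apply; apply: val_inj.
Qed.

Lemma ext_out n (v : 'cV[R]_n) j : (n <= j)%N -> ext v j = 0.
Proof.
move=> nj; rewrite /ext big1 // => i _; case: (eqVneq (i : nat) j) => e; last by rewrite mul0r.
by move: (ltn_ord i); rewrite e ltnNge nj.
Qed.

Lemma extD n (v w : 'cV[R]_n) j : ext (v + w) j = ext v j + ext w j.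
Proof. by rewrite /ext -big_split; apply: eq_bigr => i _; rewrite !mxE mulrDr. Qed.

Lemma extN n (v : 'cV[R]_n) j : ext (- v) j = - ext v j.
Proof. by rewrite /ext -sumrN; apply: eq_bigr => i _; rewrite !mxE mulrN. Qed.

Lemma extB n (v w : 'cV[R]_n) j : ext (v - w) j = ext v j - ext w j.
Proof. by rewrite extD extN. Qed.

Lemma extZ n (a : R) (v : 'cV[R]_n) j : ext (a *: v) j = a * ext v j.
Proof. by rewrite /ext mulr_sumr; apply: eq_bigr => i _; rewrite !mxE; ring. Qed.

Lemma ext_norm n (v : 'cV[R]_n) j : `|ext v j| <= `|v|.
Proof.
case: (ltnP j n) => jn.
  by rewrite -[j]/(nat_of_ord (Ordinal jn)) ext_ord mx_entry_le.
by rewrite ext_out // normr0 normr_ge0.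
Qed.

Lemma ext_Ash m (v : 'cV[R]_m.+1) j : ext (Ash R m *m v) j = ext v j.+1.
Proof.
rewrite {1}/ext.
have -> : \sum_(i < m.+1) ((i : nat) == j)%:R * (Ash R m *m v) i 0 =
          \sum_(i < m.+1) ((i : nat) == j)%:R * ext v i.+1.
  apply: eq_bigr => i _; congr (_ * _); rewrite mxE /ext; apply: eq_bigr => l _.
  by rewrite mxE eq_sym.
rewrite (ext_sum _ (fun k => ext v k.+1)); case: (ltnP j m.+1) => // jm.
by rewrite ext_out // leqW.
Qed.

Lemma Crow_mul m (v : 'cV[R]_m.+1) : (Crow R m *m v) 0 0 = ext v 0.
Proof. by rewrite mxE /ext; apply: eq_bigr => i _; rewrite mxE. Qed.

Lemma first_ext m (v : 'cV[R]_m.+1) : first v = ext v 0.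
Proof. exact: Crow_mul. Qed.

Lemma ext_mul11 n (K : 'cV[R]_n) (M : 'M[R]_1) j : ext (K *m M) j = ext K j * M 0 0.
Proof.
rewrite /ext mulr_suml; apply: eq_bigr => i _.
by rewrite mxE big_ord1 mulrA.
Qed.

Lemma ext_b0 m (bt : 'cV[R]_m) : ext (bvec bt) 0 = 1.
Proof.
rewrite -[0%N]/(nat_of_ord (@ord0 m)) ext_ord /bvec.
rewrite /bvec mxE; case: splitP => i' /= e.
  by rewrite (ord1 i') mxE.
by move: e; rewrite add1n.
Qed.

Lemma ext_bS m (bt : 'cV[R]_m) j : ext (bvec bt) j.+1 = ext bt j.
Proof.
case: (ltnP j m) => jm.
  rewrite -[j]/(nat_of_ord (Ordinal jm)) ext_ord.
  rewrite -[(Ordinal jm).+1]/(nat_of_ord (rshift 1 (Ordinal jm))) ext_ord.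
  rewrite /bvec mxE; case: splitP => i' /= e; first by move: (ltn_ord i'); rewrite -e.
  by congr (bt _ _); apply: val_inj; move: e; rewrite add1n => -[].
by rewrite !ext_out.
Qed.

Lemma F_mul m (bt : 'cV[R]_m) (w : 'cV[R]_m) i : (Fmat bt *m w) i 0 = - bt i 0 * ext w 0 + ext w i.+1.
Proof.
rewrite mxE /ext mulr_sumr -big_split /=; apply: eq_bigr => j _; rewrite mxE.
case: (eqVneq (j : nat) 0) => j0; last by rewrite mul0r mulr0 add0r.
by rewrite j0 /= mul1r mul0r addr0.
Qed.

Lemma G_mul m (bt : 'cV[R]_m) (v : 'cV[R]_m.+1) i : (Gmat bt *m v) i 0 = - bt i 0 * ext v 0 + ext v i.+1.
Proof.
rewrite mxE /ext mulr_sumr -big_split /=; apply: eq_bigr => j _.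
rewrite /Gmat mxE; case: (@splitP 1 m j) => j' ej.
  move: ej; rewrite (ord1 j') /= => ej.
  by rewrite !mxE ej /= mul1r mul0r addr0.
by rewrite !mxE ej /= mul0r mulr0 add0r eqSS eq_sym.
Qed.

Lemma ext_G m (bt : 'cV[R]_m) (v : 'cV[R]_m.+1) j :
  ext (Gmat bt *m v) j = - ext bt j * ext v 0 + ext v j.+1.
Proof.
rewrite {1}/ext.
have -> : \sum_(i < m) ((i : nat) == j)%:R * (Gmat bt *m v) i 0 =
   \sum_(i < m) ((i : nat) == j)%:R * (- ext bt i * ext v 0) + \sum_(i < m) ((i : nat) == j)%:R * ext v i.+1.
  rewrite -big_split /=; apply: eq_bigr => i _; rewrite G_mul ext_ord; ring.
rewrite (ext_sum _ (fun k => - ext bt k * ext v 0)) (ext_sum _ (fun k => ext v k.+1)).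
case: (ltnP j m) => jm; first by [].
have h : (m.+1 <= j.+1)%N by [].
rewrite (ext_out bt jm) (ext_out v h); ring.
Qed.

Lemma ext_K m (bt : 'cV[R]_m) lam j :
  ext (Kvec bt lam) j = ext (bvec bt) j.+1 + lam * ext (bvec bt) j.
Proof. by rewrite /Kvec extD ext_Ash extZ. Qed.

Lemma ext_field m (bt : 'cV[R]_m) lam (eta : 'cV[R]_m.+1) (u : 'M[R]_1) (E : 'cV[R]_m.+1) j :
  ext ((Ash R m - Kvec bt lam *m Crow R m) *m eta + bvec bt *m u + E) j =
  ext eta j.+1 - ext (Kvec bt lam) j * ext eta 0 + ext (bvec bt) j * u 0 0 + ext E j.
Proof.
rewrite !extD mulmxBl extB -mulmxA !ext_mul11 Crow_mul (ext_Ash eta) ext_K ext_Ash extZ; ring.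
Qed.

Lemma zeta_eq m (bt : 'cV[R]_m) lam (eta : 'cV[R]_m.+1) (u : 'M[R]_1) (E : 'cV[R]_m.+1) :
  Gmat bt *m ((Ash R m - Kvec bt lam *m Crow R m) *m eta + bvec bt *m u + E)
  = Fmat bt *m (Gmat bt *m eta) + Gmat bt *m E.
Proof.
apply/matrixP => i j; rewrite (ord1 j) [RHS]mxE G_mul F_mul G_mul !ext_G !ext_field.
rewrite !ext_K !ext_bS ext_b0 -!ext_ord.
ring.
Qed.

Lemma y_eq m (bt : 'cV[R]_m) lam (eta : 'cV[R]_m.+1) (u : 'M[R]_1) (E : 'cV[R]_m.+1) :
  ext ((Ash R m - Kvec bt lam *m Crow R m) *m eta + bvec bt *m u + E) 0 =
  - lam * ext eta 0 + ext (Gmat bt *m eta) 0 + u 0 0 + ext E 0.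
Proof. rewrite ext_field ext_G ext_K ext_bS ext_b0; ring. Qed.

Lemma ext0 m (v : 'cV[R]_m.+1) : ext v 0 = v 0 0.
Proof. by rewrite -[0%N]/(nat_of_ord (@ord0 m)) ext_ord. Qed.

Lemma first_00 m (v : 'cV[R]_m.+1) : first v = v 0 0.
Proof. by rewrite first_ext ext0. Qed.

End C.


Section D.
Variable R : realType.

Lemma mx_norm_ge0 m n (A : 'M[R]_(m, n)) : 0 <= `|A|.
Proof. exact: normr_ge0. Qed.

Lemma mulmx_norm m n p (A : 'M[R]_(m, n)) (B : 'M[R]_(n, p)) :
  `|A *m B| <= n%:R * (`|A| * `|B|).
Proof.
apply: mx_norm_le; first by rewrite mulr_ge0 // mulr_ge0.
move=> i j; rewrite mxE; apply: le_trans (ler_norm_sum _ _ _) _.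
rewrite mulr_natl -[n in _ *+ n]card_ord -sumr_const; apply: ler_sum => k _.
by rewrite normrM ler_pM // mx_entry_le.
Qed.

Lemma trmx_norm m n (A : 'M[R]_(m, n)) : `|A^T| <= `|A|.
Proof. by apply: mx_norm_le => // i j; rewrite mxE mx_entry_le. Qed.

Lemma derive_mulmx m n p (M : 'M[R]_(m, n)) (Y : R -> 'M[R]_(n, p)) t :
  derivable Y t 1 -> derivable (fun s => M *m Y s) t 1 /\ 'D_1 (fun s => M *m Y s) t = M *m 'D_1 Y t.
Proof.
move=> dY.
have H i j : DV (fun s => (M *m Y s) i j) t ((M *m 'D_1 Y t) i j).
  apply: (DV_ext (f := fun s => \sum_k M i k * Y s k j)); first by move=> s; rewrite mxE.
  rewrite mxE; apply: DV_sum => k; apply: DV_scal; exact: derive_entry.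
have [h1 h2] := derive_entries (fun i j => (H i j).1).
split => //; rewrite h2; apply/matrixP => i j; rewrite mxE; exact: (H i j).2.
Qed.

Lemma DV_entry m n (Y : R -> 'M[R]_(m, n)) t i j :
  derivable Y t 1 -> DV (fun s => Y s i j) t ('D_1 Y t i j).
Proof. exact: derive_entry. Qed.

Lemma derive_add (V : normedModType R) (f g : R -> V) t :
  derivable f t 1 -> derivable g t 1 ->
  derivable (fun s => f s + g s) t 1 /\ 'D_1 (fun s => f s + g s) t = 'D_1 f t + 'D_1 g t.
Proof. by move=> df dg; split; [exact: derivableD|exact: deriveD]. Qed.

Lemma chain (V W : normedModType R) (f : V -> W) (z : R -> V) t :
  derivable z t 1 -> differentiable f (z t) ->
  derivable (fun s => f (z s)) t 1 /\ 'D_1 (fun s => f (z s)) t = 'd f (z t) ('D_1 z t).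
Proof.
move=> dz df.
have dz' : differentiable z t by apply/derivable1_diffP.
have dc : differentiable (f \o z) t by apply: differentiable_comp.
split; first by apply/derivable1_diffP.
rewrite deriveE //; change ('d (f \o z) t 1 = 'd f (z t) ('D_1 z t)).
by rewrite diff_comp // [in RHS]deriveE.
Qed.

Lemma lip_cont (V W : normedModType R) (f : V -> W) :
  (forall u v, `|f u - f v| <= `|u - v|) -> continuous f.
Proof.
move=> H x; apply/cvgrPdist_lt => e e0.
near=> y; apply: le_lt_trans (H x y) _.
near: y; exact: cvgr_dist_lt.
Unshelve. all: by end_near.
Qed.

Lemma col_mx0_lip n (u v : 'cV[R]_n) :
  `|col_mx u (0 : 'cV[R]_1) - col_mx v 0| <= `|u - v|.
Proof.
rewrite opp_col_mx add_col_mx subr0.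
apply: mx_norm_le => // i j.
case: (splitP i) => i' ei.
  have -> : i = lshift 1 i' by apply: val_inj.
  by rewrite col_mxEu mx_entry_le.
have -> : i = rshift n i' by apply: val_inj.
by rewrite col_mxEd mxE normr0.
Qed.

End D.

Section D2.
Variable R : realType.
Lemma KC m (K : 'cV[R]_m.+1) (v : 'cV[R]_m.+1) : K *m Crow R m *m v = first v *: K.
Proof. by rewrite -mulmxA [Crow R m *m v]mx11_scalar mul_mx_scalar. Qed.
End D2.

Section D3.
Variable R : realType.

Lemma dz_ineq (dz : R -> R) (l D B2 B3 s th p : R) :
  (forall x, l + 1 <= `|x| -> dz x = x) ->
  (forall x, `|x| <= `|l| + 1 -> `|dz x| <= D) -> 0 <= B2 -> 0 <= D ->
  `|s| <= B2 -> `|p| <= B3 ->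
  2 * s * th - 2 * th * dz (th + p) <=
    - th ^+ 2 + ((B2 + B3) ^+ 2 + (`|l| + 1 + B3) ^+ 2 + 2 * (`|l| + 1 + B3) * (B2 + D)).
Proof.
move=> h1 h2 B20 D0 hs hp.
have B30 : 0 <= B3 by apply: le_trans hp.
have l0 := normr_ge0 l.
have L0 : 0 <= `|l| + 1 + B3 by rewrite !addr_ge0.
have e1 : 0 <= (`|l| + 1 + B3) ^+ 2 + 2 * (`|l| + 1 + B3) * (B2 + D).
  by rewrite addr_ge0 ?sqr_ge0 // !mulr_ge0 // addr_ge0.
case: (lerP (l + 1) `|th + p|) => hx.
  rewrite h1 //.
  have : `|s - p| <= B2 + B3 by apply: le_trans (ler_normB _ _) _; apply: lerD.
  rewrite ler_norml => /andP[a1 a2].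
  have a3 : (s - p) ^+ 2 <= (B2 + B3) ^+ 2.
    have : 0 <= B2 + B3 by rewrite addr_ge0.
    nra.
  have a4 := sqr_ge0 (th - (s - p)).
  nra.
have hx' : `|th + p| <= `|l| + 1.
  apply: ltW; apply: lt_le_trans hx _; rewrite lerD2r; exact: ler_norm.
have hd := h2 _ hx'.
have ht : `|th| <= `|l| + 1 + B3.
  have -> : th = (th + p) - p by ring.
  apply: le_trans (ler_normB _ _) _; exact: lerD.
have b1 : `|s * th| <= B2 * (`|l| + 1 + B3) by rewrite normrM ler_pM.
have b2 : `|th * dz (th + p)| <= (`|l| + 1 + B3) * D by rewrite normrM ler_pM.
move: b1 b2; rewrite !ler_norml => /andP[b1 b1'] /andP[b2 b2'].
have b3 : th ^+ 2 <= (`|l| + 1 + B3) ^+ 2.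
  move: ht; rewrite ler_norml => /andP[c1 c2]; nra.
have := sqr_ge0 (B2 + B3).
nra.
Qed.

Lemma col0_norm m q (X : 'M[R]_(m, q)) : `|col_mx (0 : 'M[R]_(1, q)) X| <= `|X|.
Proof.
apply: mx_norm_le => // i j.
case: (splitP i) => i' ei.
  have -> : i = lshift m i' by apply: val_inj.
  by rewrite col_mxEu mxE normr0.
have -> : i = rshift 1 i' by apply: val_inj.
by rewrite col_mxEd mx_entry_le.
Qed.

End D3.

End Helpers.
Import Helpers.
Import Num.Def.

Theorem lemma1 (R : realType) (p sw n m q : nat)
  (s : 'cV[R]_p -> 'cV[R]_sw -> 'cV[R]_sw)
  (f0 : 'cV[R]_p -> 'cV[R]_sw -> 'cV[R]_n -> 'cV[R]_n)
  (f1 : 'cV[R]_p -> 'cV[R]_sw -> 'cV[R]_n -> R -> 'cV[R]_n)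
  (qq : 'cV[R]_p -> 'cV[R]_sw -> 'cV[R]_n -> R -> R)
  (P : set 'cV[R]_p) (W : set 'cV[R]_sw) (Z : set 'cV[R]_n)
  (* all functions C^1 *)
  (Hs : C1 (fun v : 'cV[R]_(p + sw) => s (usubmx v) (dsubmx v)))
  (Hf0 : C1 (fun v : 'cV[R]_(p + sw + n) => f0 (rho_of v) (w_of v) (z_of v)))
  (Hf1 : C1 (fun v : 'cV[R]_(p + sw + n + 1) =>
          f1 (rho_of (usubmx v)) (w_of (usubmx v)) (z_of (usubmx v)) (dsubmx v 0 0)))
  (Hq : C1 (fun v : 'cV[R]_(p + sw + n + 1) =>
          qq (rho_of (usubmx v)) (w_of (usubmx v)) (z_of (usubmx v)) (dsubmx v 0 0)))
  (cP : compact P) (cW : compact W) (cZ : compact Z) :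
  let Zb : set 'cV[R]_(p + sw + n) :=
    [set v | P (rho_of v) /\ W (w_of v) /\ Z (z_of v)] in
  let PW : set 'cV[R]_(p + sw) := [set v | P (usubmx v) /\ W (dsubmx v)] in
  let c : 'cV[R]_(p + sw + n) -> R :=
    fun v => - qq (rho_of v) (w_of v) (z_of v) 0 in
  let F0 := f0bold s f0 in
  (* Assumption (i) *)
  submanifold_wb PW ->
  invariant_set (fun v : 'cV[R]_(p + sw) => col_mx 0 (s (usubmx v) (dsubmx v))) PW ->
  (* Assumption (ii) *)
  forall Zc : set 'cV[R]_(p + sw + n),
  compact Zc -> (forall v, Zc v -> PW (usubmx v)) ->
  pos_orbit_in F0 Zb Zc ->
  submanifold_wb (omega_limit F0 Zb) ->
  (exists2 d1 : R, 0 < d1 & forall v, PW (usubmx v) ->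
      dist_le v (omega_limit F0 Zb) d1 -> Zb v) ->
  (* Assumption (iv) *)
  forall (tau : 'cV[R]_(p + sw + n) -> 'cV[R]_m.+1)
         (theta : 'cV[R]_p -> 'cV[R]_q)
         (phi : R -> 'cV[R]_m.+1) (Om : R -> 'M[R]_(m.+1, q)),
  (exists2 U : set 'cV[R]_(p + sw + n), open U /\ Zc `<=` U & C1_on U tau) ->
  {within P, continuous theta} ->
  C1 phi -> C1 Om ->
  (exists M : R, forall x : R, M < `|x| -> phi x = 0 /\ Om x = 0) ->
  (forall v, omega_limit F0 Zb v ->
     'd tau v (F0 v) = Ash R m *m tau v + phi (first (tau v))
                       + Om (first (tau v)) *m theta (rho_of v)
     /\ c v = first (tau v)) ->
  (* design quantities *)
  forall (bt : 'cV[R]_m),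
  (exists rs : seq (R[i]), [/\ size rs = m, uniq rs,
      all (root (map_poly (real_complex R) (bpoly bt))) rs &
      all (fun r => Re r < 0) rs]) ->
  forall (l : R) (dz : R -> R),
  C1 dz ->
  (forall x, `|x| <= l -> dz x = 0) ->
  (forall x, l + 1 <= `|x| -> dz x = x) ->
  (forall r, P r -> eucl (theta r) < l) ->
  exists lamstar : R, forall lam : R, lamstar <= lam -> 0 < lam ->
  forall (a b : \bar R) (x : R -> cl_state R p sw n m q),
    (a < 0 < b)%E ->
    is_solution (cl_field s f0 c tau theta phi Om bt lam dz) (open_itv a b) x ->
    Zb (x 0).1.1 ->
    exists M : R, forall t, 0 <= t -> (t%:E < b)%E -> `|x t| <= M.
Proof.
move=> Zb PW c F0 hPWman hinv Zc cZc hZcPW horb hman hd1 tau theta phi Om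
  [U [oU ZcU] htau] hth hphi hOm [M0 hM0] hom bt [rs [sz un hroots hre]] l dz hdz hdz0 hdz1 hthl.
exists 1 => lam lam1 lam0 a b x hab hsol hx0.
pose zf := fun t => (x t).1.1.
pose chf := fun t => (x t).1.2.
pose thf := fun t => (x t).2.1.
pose Xf := fun t => (x t).2.2.
have a0 : (a < 0%:E)%E by case/andP: hab.
have Iab t : 0 <= t -> (t%:E < b)%E -> open_itv a b t.
  move=> t0 tb; rewrite /open_itv /= tb andbT; apply: lt_le_trans a0 _; by rewrite lee_fin.
have xe t : x t = ((zf t, chf t), (thf t, Xf t)) by rewrite /zf /chf /thf /Xf; case: (x t) => [[? ?] [? ?]].
have D1 t : open_itv a b t -> derivable (fun s => (x s).1) t 1 /\ 'D_1 (fun s => (x s).1) t = ('D_1 x t).1.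
  by move=> ht; apply: derive_fst; exact: (hsol t ht).1.
have D2 t : open_itv a b t -> derivable (fun s => (x s).2) t 1 /\ 'D_1 (fun s => (x s).2) t = ('D_1 x t).2.
  by move=> ht; apply: derive_snd; exact: (hsol t ht).1.
have Dx t : open_itv a b t -> 'D_1 x t = cl_field s f0 c tau theta phi Om bt lam dz
     ((zf t, chf t), (thf t, Xf t)).
  by move=> ht; rewrite -xe; exact: (hsol t ht).2.
have Dz t : open_itv a b t -> derivable zf t 1 /\ 'D_1 zf t = F0 (zf t).
  move=> ht; have [h1 h2] := D1 t ht; have [h3 h4] := derive_fst h1.
  by split => //; rewrite /zf h4 h2 Dx.
have Dch t : open_itv a b t -> derivable chf t 1 /\ 'D_1 chf t = (cl_field s f0 c tau theta phi Om bt lam dz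
     ((zf t, chf t), (thf t, Xf t))).1.2.
  move=> ht; have [h1 h2] := D1 t ht; have [h3 h4] := derive_snd h1.
  by split => //; rewrite /chf h4 h2 Dx.
have Dth t : open_itv a b t -> derivable thf t 1 /\ 'D_1 thf t = (cl_field s f0 c tau theta phi Om bt lam dz
     ((zf t, chf t), (thf t, Xf t))).2.1.
  move=> ht; have [h1 h2] := D2 t ht; have [h3 h4] := derive_fst h1.
  by split => //; rewrite /thf h4 h2 Dx.
have DX t : open_itv a b t -> derivable Xf t 1 /\ 'D_1 Xf t = (cl_field s f0 c tau theta phi Om bt lam dz
     ((zf t, chf t), (thf t, Xf t))).2.2.
  move=> ht; have [h1 h2] := D2 t ht; have [h3 h4] := derive_snd h1.
  by split => //; rewrite /Xf h4 h2 Dx.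
have hZ t : 0 <= t -> (t%:E < b)%E -> Zc (zf t).
  by apply: (horb a b zf hab).
have [Mz [Mz0 hMz]] : exists M, 0 <= M /\ forall v, Zc v -> `|v| <= M.
  have := bounded_on_compact (f := id) cZc.
  by apply; apply: continuous_subspaceT => v; exact: cvg_id.
have ctau : {within Zc, continuous tau}.
  apply/continuous_in_subspaceT => v /[1!inE] Zv; apply: differentiable_continuous.
  exact: htau.1 v (ZcU v Zv).
have [Mta [Mta0 hMta]] := bounded_on_compact cZc ctau.
have cc : continuous c.
  pose hq := fun v' : 'cV[R]_(p + sw + n + 1) => qq (rho_of (usubmx v')) (w_of (usubmx v'))
     (z_of (usubmx v')) (dsubmx v' 0 0).
  have hqc : continuous hq by move=> v; apply: differentiable_continuous; exact: Hq.1.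
  have -> : c = fun v => - hq (col_mx v 0).
    by apply: funext => v; rewrite /c /hq col_mxKu col_mxKd mxE.
  have cl : continuous (fun v : 'cV[R]_(p + sw + n) => col_mx v (0 : 'cV[R]_1)).
    by apply: lip_cont => u v; exact: col_mx0_lip.
  move=> v; apply: (continuousN (f := fun v => hq (col_mx v 0))); exact: (continuous_comp (cl v) (hqc _)).
have wc : {within Zc, continuous c} by apply: continuous_subspaceT.
have [Mcc [Mcc0 hMc]] := bounded_on_compact cZc wc.
have [Mth [Mth0 hMth]] := bounded_on_compact cP hth.
have gbound (W' : normedModType R) (f : R -> W') : C1 f -> (forall y, M0 < `|y| -> f y = 0) ->
    exists M, 0 <= M /\ forall y, `|f y| <= M.
  move=> hf h0; have cf : continuous f := fun y => differentiable_continuous (hf.1 y I).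
  have wf : {within `[- `|M0|, `|M0|]%classic, continuous f} by apply: continuous_subspaceT.
  have [M [M00 hM]] := bounded_on_compact (segment_compact (a := - `|M0|) (b := `|M0|)) wf.
  exists M; split => // y; case: (lerP `|y| `|M0|) => hy.
    by apply: hM; rewrite /= in_itv /= -ler_norml.
  rewrite h0 ?normr0 //; apply: le_lt_trans hy; exact: ler_norm.
have [Mph [Mph0 hMph]] := gbound _ phi hphi (fun y hy => (hM0 y hy).1).
have [MO [MO0 hMO]] := gbound _ Om hOm (fun y hy => (hM0 y hy).2).
have cdz : continuous dz := fun y => differentiable_continuous (hdz.1 y I).
have wdz : {within `[- (`|l| + 1), `|l| + 1]%classic, continuous dz} by apply: continuous_subspaceT.
have [Mdz [Mdz0 hMdz]] := bounded_on_compact (segment_compact (a := - (`|l| + 1)) (b := `|l| + 1)) wdz.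
have hPt t : 0 <= t -> (t%:E < b)%E -> P (rho_of (zf t)) by move=> t0 tb; exact: (hZcPW _ (hZ t t0 tb)).1.
have [MX hMX] : exists MX, forall t, 0 <= t -> (t%:E < b)%E -> `|Xf t| <= MX.
  have H := modal sz un hroots hre (b := b) (Y := Xf) (g := fun t => Gmat bt *m Om (first (chf t) + first (tau (zf t)))).
  apply: H.
    move=> t t0 tb; have [h1 h2] := DX t (Iab t t0 tb); split => //; rewrite h2 /=.
  exists (m.+1%:R * (`|Gmat bt| * MO)) => t _ _.
  apply: (le_trans (mulmx_norm _ _)).
  by rewrite ler_wpM2l // ler_wpM2l.
pose tau1 := fun t => first (tau (zf t)).
pose ch1 := fun t => first (chf t).
pose th := fun t => theta (rho_of (zf t)).
pose bet := fun t => beta Om (Xf t) (ch1 t + tau1 t).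
pose uu := fun t => (bet t)^T *m thf t.
pose Ef := fun t => phi (ch1 t + tau1 t) - phi (ch1 t) + (Om (ch1 t + tau1 t) - Om (ch1 t)) *m th t
   + c (zf t) *: Kvec bt lam + phi (tau1 t) + Om (tau1 t) *m th t.
pose eta := fun t => chf t + tau (zf t).
have Deta t : 0 <= t -> (t%:E < b)%E -> derivable eta t 1 /\
    'D_1 eta t = (Ash R m - Kvec bt lam *m Crow R m) *m eta t + bvec bt *m uu t + Ef t.
  move=> t0 tb; have [h1 h2] := Dch t (Iab t t0 tb); have [h3 h4] := Dz t (Iab t t0 tb).
  have [h5 h6] := chain h3 (htau.1 _ (ZcU _ (hZ t t0 tb))).
  have [h7 h8] := derive_add h1 h5.
  split => //; rewrite h8 h2 h6 h4 /=.
  rewrite /eta /Ef /uu /bet /ch1 /tau1 /th /F0 mulmxDr !mulmxBl !KC.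
  apply/matrixP => i j; rewrite !mxE; ring.
have hth_t t : 0 <= t -> (t%:E < b)%E -> `|th t| <= Mth by move=> t0 tb; exact: hMth (hPt t t0 tb).
pose ME := (Mph + Mph) + q%:R * ((MO + MO) * Mth) + Mcc * `|Kvec bt lam| + Mph + q%:R * (MO * Mth).
have hME t : 0 <= t -> (t%:E < b)%E -> `|Ef t| <= ME.
  move=> t0 tb; rewrite /Ef /ME.
  have hc : `|c (zf t)| <= Mcc by exact: hMc (hZ t t0 tb).
  have ht := hth_t t t0 tb.
  apply: (le_trans (ler_normD _ _)); apply: lerD; last first.
    apply: (le_trans (mulmx_norm _ _)); rewrite ler_wpM2l // ler_pM //.
  apply: (le_trans (ler_normD _ _)); apply: lerD; last exact: hMph.
  apply: (le_trans (ler_normD _ _)); apply: lerD; last first.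
    by rewrite normrZ ler_wpM2r.
  apply: (le_trans (ler_normD _ _)); apply: lerD; last first.
    apply: (le_trans (mulmx_norm _ _)); rewrite ler_wpM2l // ler_pM // ?addr_ge0 //.
    by apply: (le_trans (ler_normB _ _)); apply: lerD.
  by apply: (le_trans (ler_normB _ _)); apply: lerD.
pose zeta := fun t => Gmat bt *m eta t.
have [Mze hMze] : exists M, forall t, 0 <= t -> (t%:E < b)%E -> `|zeta t| <= M.
  have H := modal sz un hroots hre (b := b) (Y := zeta) (g := fun t => Gmat bt *m Ef t).
  apply: H.
    move=> t t0 tb; have [h1 h2] := Deta t t0 tb; have [h3 h4] := derive_mulmx (Gmat bt) h1.
    by split => //; rewrite h4 h2 zeta_eq.
  exists (m.+1%:R * (`|Gmat bt| * ME)) => t t0 tb.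
  apply: (le_trans (mulmx_norm _ _)); rewrite ler_wpM2l // ler_wpM2l //; exact: hME.
pose Mb := m.+1%:R * (`|Crow R m *m Ash R m| * MX) + m.+1%:R * (`|Crow R m| * MO).
have hMb t : 0 <= t -> (t%:E < b)%E -> `|bet t| <= Mb.
  move=> t0 tb; rewrite /bet /beta; apply: (le_trans (trmx_norm _)).
  apply: (le_trans (ler_normD _ _)); apply: lerD.
    apply: (le_trans (mulmx_norm _ _)); rewrite ler_wpM2l // ler_wpM2l //.
    rewrite /Mmat; apply: (le_trans (col0_norm _)); exact: hMX.
  apply: (le_trans (mulmx_norm _ _)); rewrite ler_wpM2l // ler_wpM2l //.
pose y := fun t => eta t 0 0.
pose V := fun t => y t * y t + \sum_(k < q) thf t k 0 * thf t k 0.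
pose Bw := Mze + ME.
pose L0 := `|l| + 1 + Mth.
pose B2 := Mta * maxr 0 Mb.
pose Cd := (B2 + Mth) ^+ 2 + L0 ^+ 2 + 2 * L0 * (B2 + Mdz).
pose CV := Bw ^+ 2 + q%:R * Cd.
have hV t : 0 <= t -> (t%:E < b)%E -> derivable V t 1 /\ 'D_1 V t <= - 1 * V t + CV.
  move=> t0 tb.
  have [de1 de2] := Deta t t0 tb.
  have Dy : DV y t (- lam * y t + ext (Gmat bt *m eta t) 0 + uu t 0 0 + ext (Ef t) 0).
    have [h1 h2] := DV_entry (0 : 'I_m.+1) (0 : 'I_1) de1.
    split => //; rewrite h2.
    transitivity (ext ((Ash R m - Kvec bt lam *m Crow R m) *m eta t + bvec bt *m uu t + Ef t) 0).
      by rewrite ext0 de2.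
    by rewrite y_eq ext0.
  have Dthk k : DV (fun s => thf s k 0) t (- (ch1 t * bet t k 0) - dz (thf t k 0 + th t k 0)).
    have [h1 h2] := Dth t (Iab t t0 tb); have [h3 h4] := DV_entry k 0 h1.
    split => //; rewrite h4 h2 /= !mxE.
    by [].
  have DVV := DV_add (DV_mul Dy Dy) (DV_sum (fun k => DV_mul (Dthk k) (Dthk k))).
  split; first exact: DVV.1.
  rewrite DVV.2.
  have hu : uu t 0 0 = \sum_k bet t k 0 * thf t k 0.
    by rewrite /uu mxE; apply: eq_bigr => k _; rewrite mxE.
  have hch : ch1 t = y t - tau1 t by rewrite /ch1 /tau1 /y /eta !first_00 mxE; ring.
  rewrite hu hch.
  have hG0 : `|ext (Gmat bt *m eta t) 0 + ext (Ef t) 0| <= Bw.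
    apply: (le_trans (ler_normD _ _)); apply: lerD.
      by apply: (le_trans (ext_norm _ _)); exact: hMze.
    by apply: (le_trans (ext_norm _ _)); exact: hME.
  have B20 : 0 <= B2 by rewrite /B2 mulr_ge0 // le_max lexx.
  have hk k : 2 * (tau1 t * bet t k 0) * thf t k 0 - 2 * thf t k 0 * dz (thf t k 0 + th t k 0)
       <= - thf t k 0 ^+ 2 + Cd.
    apply: dz_ineq => //.
    - move=> v hv; apply: hMdz; by rewrite /= in_itv /= -ler_norml.
    - rewrite normrM; apply: ler_pM => //.
        rewrite /tau1 first_ext; apply: (le_trans (ext_norm _ _)); exact: hMta (hZ t t0 tb).
      apply: (le_trans (mx_entry_le _ _ _)); apply: (le_trans (hMb t t0 tb)).
      by rewrite le_max lexx orbT.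
    - apply: (le_trans (mx_entry_le _ _ _)); exact: hth_t.
  set Y := y t. set G0 := ext (Gmat bt *m eta t) 0. set E0 := ext (Ef t) 0.
  set T1 := tau1 t.
  have e : (- lam * Y + G0 + \sum_k bet t k 0 * thf t k 0 + E0) * Y +
      Y * (- lam * Y + G0 + \sum_k bet t k 0 * thf t k 0 + E0) +
      \sum_i ((- ((Y - T1) * bet t i 0) - dz (thf t i 0 + th t i 0)) * thf t i 0 +
        thf t i 0 * (- ((Y - T1) * bet t i 0) - dz (thf t i 0 + th t i 0))) =
      (- 2 * lam * Y ^+ 2 + 2 * Y * (G0 + E0)) +
      \sum_i (2 * (T1 * bet t i 0) * thf t i 0 - 2 * thf t i 0 * dz (thf t i 0 + th t i 0)).
    have -> : \sum_i (2 * (T1 * bet t i 0) * thf t i 0 - 2 * thf t i 0 * dz (thf t i 0 + th t i 0)) =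
       \sum_i (2 * Y * (bet t i 0 * thf t i 0)) +
       \sum_i ((- ((Y - T1) * bet t i 0) - dz (thf t i 0 + th t i 0)) * thf t i 0 +
        thf t i 0 * (- ((Y - T1) * bet t i 0) - dz (thf t i 0 + th t i 0))).
      rewrite -big_split /=; apply: eq_bigr => i _; ring.
    rewrite -mulr_sumr; ring.
  rewrite e.
  have hs : \sum_i (2 * (T1 * bet t i 0) * thf t i 0 - 2 * thf t i 0 * dz (thf t i 0 + th t i 0))
      <= - \sum_i thf t i 0 ^+ 2 + q%:R * Cd.
    apply: (le_trans (ler_sum _ (fun i _ => hk i))).
    rewrite big_split /= sumrN sumr_const card_ord mulr_natl; by [].
  have hV0 : V t = Y ^+ 2 + \sum_i thf t i 0 ^+ 2.
    by rewrite /V /Y expr2; congr (_ + _); apply: eq_bigr => i _; rewrite expr2.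
  rewrite hV0 /CV.
  have : `|G0 + E0| <= Bw by [].
  rewrite ler_norml => /andP[w1 w2].
  have w3 : (G0 + E0) ^+ 2 <= Bw ^+ 2.
    have : 0 <= Bw by apply: le_trans (normr_ge0 _) hG0.
    nra.
  have := sqr_ge0 (Y - (G0 + E0)).
  have := sqr_ge0 Y.
  nra.
pose KV := maxr (V 0) (CV / 1).
have hVb t : 0 <= t -> (t%:E < b)%E -> V t <= KV.
  move=> t0 tb; have HH := comparison (f := V) (b := b) (k := 1) (C := CV) ltr01.
  exact: (HH hV t t0 tb).
have hy t : 0 <= t -> (t%:E < b)%E -> `|y t| <= 1 + KV.
  move=> t0 tb; apply: (le_trans (abs_le_sq _)); rewrite lerD2l.
  apply: le_trans (hVb t t0 tb); rewrite /V expr2 lerDl.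
  by apply: sumr_ge0 => i _; rewrite -expr2 sqr_ge0.
have hthk t k : 0 <= t -> (t%:E < b)%E -> `|thf t k 0| <= 1 + KV.
  move=> t0 tb; apply: (le_trans (abs_le_sq _)); rewrite lerD2l.
  have h0 := hVb t t0 tb.
  have h1 : thf t k 0 ^+ 2 <= \sum_i thf t i 0 * thf t i 0.
    rewrite expr2; apply: (le_sum_one (F := fun i => thf t i 0 * thf t i 0)) => i.
    by rewrite -expr2 sqr_ge0.
  have h2 := sqr_ge0 (y t); rewrite expr2 in h2.
  rewrite /V in h0; lra.
pose Me := (1 + KV) + maxr 0 Mze + `|bt| * (1 + KV).
have hKV0 : 0 <= 1 + KV.
  have b0 : (0%:E < b)%E by case/andP: hab.
  have h := hy 0 (lexx 0) b0; exact: le_trans (normr_ge0 _) h.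
have heta t : 0 <= t -> (t%:E < b)%E -> `|eta t| <= Me.
  move=> t0 tb; have Mze0 : 0 <= maxr 0 Mze by rewrite le_max lexx.
  have Me0 : 0 <= Me by rewrite /Me; apply: addr_ge0; [apply: addr_ge0|apply: mulr_ge0].
  apply: mx_norm_le => // i j; rewrite (ord1 j).
  case: i => -[|i'] hi.
    have -> : Ordinal hi = 0 by apply: val_inj.
    apply: le_trans (hy t t0 tb) _; rewrite /Me -addrA lerDl.
    by apply: addr_ge0 => //; apply: mulr_ge0.
  rewrite -[Ordinal hi]/(Ordinal hi) -ext_ord /=.
  have e := ext_G bt (eta t) i'.
  have -> : ext (eta t) i'.+1 = ext (Gmat bt *m eta t) i' + ext bt i' * ext (eta t) 0 by rewrite e; ring.
  rewrite ext0 -/(y t).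
  apply: (le_trans (ler_normD _ _)).
  rewrite /Me -addrA; apply: le_trans (ler_wpDl _ _) => //.
  apply: lerD.
    apply: (le_trans (ext_norm _ _)); apply: le_trans (hMze t t0 tb) _; by rewrite le_max lexx orbT.
  rewrite normrM; apply: ler_pM => //; first exact: ext_norm.
  exact: hy.
exists (maxr (maxr Mz (Me + Mta)) (maxr (1 + KV) MX)) => t t0 tb.
rewrite xe.
have hz := hMz _ (hZ t t0 tb).
have hc : `|chf t| <= Me + Mta.
  have -> : chf t = eta t - tau (zf t) by rewrite /eta addrK.
  apply: (le_trans (ler_normB _ _)); apply: lerD; first exact: heta.
  exact: hMta (hZ t t0 tb).
have hthb : `|thf t| <= 1 + KV by apply: mx_norm_le => // i j; rewrite (ord1 j); exact: hthk.
have hXb := hMX t t0 tb.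
apply: prod_norm_le; apply: prod_norm_le => /=.
- by rewrite !le_max hz.
- by rewrite !le_max hc orbT.
- by rewrite !le_max hthb orbT.
- by rewrite !le_max hXb !orbT.
Qed.
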